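(* For $n\in\mathbb{N}$ let $(U_k^{(n)})_{k\in\mathbb{N}}$ be independent random variables uniformly distributed on $\{1,\dots,n\}$, let $Y_n(m):=\log{\rm lcm}(U_1^{(n)},\dots,U_m^{(n)})$ for $m\ge1$ and $Y_n(0)=0$, and for $t\ge0$ put $$Z_n(t):=\sum_{p\le n,\ p\ \text{prime}}\log p\cdot\mathbbm{1}_{\{\max_{1\le k\le\lfloor m_nt\rfloor}\lambda_p(U_k^{(n)})\ge1\}}$$ (the maximum over an empty set being $0$). Assume $m_n\to\infty$ and $m_n=o(n)$ as $n\to\infty$. Then for every $T>0$, $$\mathbb{E}\Bigl(\sup_{t\in[0,T]}\bigl(Y_n(\lfloor m_nt\rfloor)-Z_n(t)\bigr)\Bigr)=O(m_n^{1/2}),\qquad n\to\infty.$$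
   Context: For a prime $p$ and $k\in\mathbb{N}$, $\lambda_p(k)$ is the exponent of $p$ in the prime factorization of $k$. ${\rm lcm}$ denotes least common multiple. *)

(* Defs.v *)
From HB Require Import structures.
From mathcomp Require Import all_boot all_order all_algebra.
From mathcomp Require Import all_classical all_reals all_analysis.
Set Implicit Arguments. Unset Strict Implicit. Unset Printing Implicit Defensive.
Import Order.TTheory GRing.Theory Num.Theory.
Local Open Scope ring_scope.
Local Open Scope classical_set_scope.

(* A sample (U_1,...,U_M) of values in {1,...,n} is encoded as
   u : {ffun 'I_M -> 'I_n}, with U_{k+1} = (u k).+1. *)

Definition Yn (R : realType) (n M : nat) (u : {ffun 'I_M -> 'I_n}) (j : nat) : R :=
  ln ((\big[lcmn/1%N]_(k < M | (k < j)%N) (u k).+1)%:R).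

Definition Zn (R : realType) (n M : nat) (u : {ffun 'I_M -> 'I_n}) (j : nat) : R :=
  \sum_(p < n.+1 | prime p)
     ln (p%:R : R) *
       (if (1 <= \max_(k < M | (k < j)%N) logn p (u k).+1)%N then 1 else 0).

(* E( sup_{t in [0,T]} (Y_n(floor(m t)) - Z_n(t)) ), where only U_1..U_M with
   M = floor(m T) enter; the expectation is the average over the uniform
   product law on {1..n}^M (joint law of the i.i.d. uniform U_1..U_M). *)
Definition Esup (R : realType) (n : nat) (m T : R) : R :=
  let M := Num.truncn (m * T) in
  (n%:R ^+ M)^-1 *
  \sum_(u : {ffun 'I_M -> 'I_n})
     sup [set x : R | exists t : R, 0 <= t <= T /\
            x = Yn R u (Num.truncn (m * t)) - Zn R u (Num.truncn (m * t))].

(* Main.v *)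
Require Import Defs.
From HB Require Import structures.
From mathcomp Require Import all_boot all_order all_algebra.
From mathcomp Require Import all_classical all_reals all_analysis.
From mathcomp Require Import zify.
From mathcomp.algebra_tactics Require Import ring lra.
Set Implicit Arguments. Unset Strict Implicit. Unset Printing Implicit Defensive.
Import Order.TTheory GRing.Theory Num.Theory numFieldNormedType.Exports.
Definition prim n := \prod_(0 <= p < n.+1 | prime p) p.

Lemma bin_mid_le m : 'C(m.*2.+1, m) <= 4 ^ m.
Proof.
have := expnDn 1 1 (m.*2.+1).
under eq_bigr do rewrite !exp1n !muln1.
rewrite (bigD1 (inord m)) /=; last by [].
rewrite (bigD1 (inord m.+1)) /=; last first.
  by apply/eqP => /(congr1 val); rewrite /= !inordK //; lia.
rewrite !inordK; [|lia|lia].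
have -> : 'C(m.*2.+1, m.+1) = 'C(m.*2.+1, m).
  by rewrite -[in RHS]bin_sub; [congr 'C(_, _); lia | lia].
rewrite addnA => H.
have : 'C(m.*2.+1, m) + 'C(m.*2.+1, m) <= (1 + 1) ^ m.*2.+1.
  by rewrite H leq_addr.
have -> : (1 + 1) ^ m.*2.+1 = 2 * 4 ^ m by rewrite expnS -mul2n expnM.
by rewrite addnn -mul2n leq_pmul2l.
Qed.

Lemma prime_ndvd_fact p k : prime p -> k < p -> ~~ (p %| k`!).
Proof.
move=> pp; elim: k => [|k IH] hk.
  by rewrite fact0 dvdn1; apply/eqP => e; rewrite e in pp.
rewrite factS Euclid_dvdM // negb_or IH ?andbT; last lia.
by rewrite gtnNdvd.
Qed.

Lemma prime_dvd_bin m p : prime p -> m.+1 < p -> p <= m.*2.+1 -> p %| 'C(m.*2.+1, m).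
Proof.
move=> pp h1 h2.
have hb := bin_fact (_ : m <= m.*2.+1).
have e : m.*2.+1 - m = m.+1 by lia.
have hf : p %| (m.*2.+1)`! by apply: dvdn_fact; rewrite prime_gt0.
rewrite -(hb ltac:(lia)) e in hf.
rewrite Gauss_dvdl // in hf.
rewrite coprimeMr !prime_coprime // !prime_ndvd_fact //; lia.
Qed.

Lemma prod_primes_dvd m j : m.+2 <= j <= m.*2.+2 ->
  \prod_(m.+2 <= p < j | prime p) p %| 'C(m.*2.+1, m).
Proof.
elim: j => [|j IH] /andP[h1 h2]; first by lia.
case: (ltnP m.+2 j.+1) => hj; last first.
  have -> : j.+1 = m.+2 by lia.
  by rewrite big_geq.
rewrite big_mkcond big_nat_recr /= -?big_mkcond; last by lia.
case: ifP => pj; last by rewrite muln1 IH //; lia.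
rewrite Gauss_dvd.
  rewrite IH; last by lia.
  by rewrite prime_dvd_bin //; lia.
rewrite coprime_sym big_seq_cond; apply: (big_ind (fun x => coprime j x)).
- by rewrite coprimen1.
- by move=> x y hx hy; rewrite coprimeMr hx hy.
move=> i /andP[hi pi]; rewrite prime_coprime // dvdn_prime2 //.
by apply/eqP => e; rewrite e in hi; move: hi; rewrite mem_index_iota; lia.
Qed.

Lemma prim_le n : prim n <= 4 ^ n.-1.
Proof.
elim/ltn_ind: n => n IH.
case: n IH => [|n] IH; first by rewrite /prim /index_iota /= !big_cons big_nil.
case: n IH => [|n] IH; first by rewrite /prim /index_iota /= !big_cons big_nil.
case: n IH => [|n] IH; first by rewrite /prim /index_iota /= !big_cons big_nil.
have [ho|he] := boolP (odd n.+3); last first.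
  have np : prime n.+3 = false.
    by apply/negP => /even_prime [//|]; rewrite (negbTE he).
  rewrite /prim big_mkcond big_nat_recr //= -big_mkcond np muln1.
  apply: leq_trans (IH n.+2 _) _ => //.
  by rewrite leq_exp2l.
set m := n.+3./2.
have ek : n.+3 = m.*2.+1 by rewrite -[in LHS](odd_double_half n.+3) ho.
have m1 : 1 <= m by lia.
rewrite /prim (big_cat_nat _ (n := m.+2)) //=; last by lia.
rewrite ek.
have -> : n.+2 = m + m by lia.
rewrite expnD.
apply: leq_mul.
  by have := IH m.+1 ltac:(lia); rewrite /prim.
apply: leq_trans (bin_mid_le m).
apply: dvdn_leq; first by rewrite bin_gt0; lia.
by apply: prod_primes_dvd; lia.
Qed.
Section Real.
Variable R : realType.
Local Open Scope ring_scope.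

Lemma ln_prod_nat (I : Type) (r : seq I) (P : pred I) (f : I -> nat) :
  (forall i, P i -> (0 < f i)%N) ->
  ln ((\prod_(i <- r | P i) f i)%:R : R) = \sum_(i <- r | P i) ln ((f i)%:R : R).
Proof.
move=> fp.
apply: (big_ind2 (fun (a : nat) (b : R) => (0 < a)%N -> ln (a%:R : R) = b)).
- by move=> _; rewrite ln1.
- move=> a1 b1 a2 b2 h1 h2; rewrite muln_gt0 => /andP[p1 p2].
  by rewrite natrM lnM ?h1 ?h2 // posrE ltr0n.
- by move=> i Pi _.
by rewrite prodn_cond_gt0.
Qed.

Lemma theta_le n : \sum_(p < n.+1 | prime p) ln (p%:R : R) <= n.-1%:R * ln 4.
Proof.
have h := prim_le n.
rewrite -ln_prod_nat; last by move=> i /prime_gt0.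
have -> : (\prod_(i < n.+1 | prime i) i)%N = prim n by rewrite /prim big_mkord.
rewrite mulr_natl -lnXn; last by [].
rewrite ler_ln ?posrE ?ltr0n ?expn_gt0 //; last first.
  by rewrite /prim prodn_cond_gt0 // => i /prime_gt0.
by rewrite -natrX ler_nat.
Qed.
End Real.
Section Real.
Variable R : realType.
Local Open Scope ring_scope.

Lemma abel n (w : nat -> R) :
  (forall k, (2 <= k <= n)%N -> 0 <= w k) ->
  (forall a b, (2 <= a)%N -> (a <= b)%N -> (b <= n)%N -> w b <= w a) ->
  \sum_(p < n.+1 | prime p) ln (p%:R : R) * w p <= ln 4 * \sum_(2 <= k < n.+1) w k.
Proof.
elim: n w => [|n IH] w w0 wm.
  by rewrite big_mkcond big_ord_recr big_ord0 /= big_geq // mulr0 add0r.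
case: n IH w0 wm => [|n] IH w0 wm.
  by rewrite big_mkcond big_ord_recr /= big_ord_recr big_ord0 /= big_geq // mulr0 !add0r.
set c := w n.+2.
have c0 : 0 <= c by apply: w0; lia.
have e1 : forall p : 'I_n.+3, ln (p%:R : R) * w p = ln (p%:R : R) * (w p - c) + c * ln (p%:R : R).
  by move=> p; rewrite mulrBr (mulrC c) subrK.
rewrite (eq_bigr _ (fun p _ => e1 p)) big_split /= -mulr_sumr.
rewrite big_mkcond big_ord_recr /= -big_mkcond /= subrr mulr0 if_same addr0.
have h1 := IH (fun k => w k - c) ltac:(move=> k hk; rewrite subr_ge0; apply: wm; lia)
  ltac:(move=> a b ha hab hb; rewrite lerD2r; apply: wm; lia).
have h2 := theta_le R n.+2.
have eS : \sum_(2 <= k < n.+3) w k = \sum_(2 <= k < n.+2) (w k - c) + c *+ n.+1.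
  rewrite big_nat_recr //= sumrB sumr_const_nat.
  have -> : (n.+2 - 2 = n)%N by lia.
  by rewrite mulrSr addrA subrK.
rewrite eS mulrDr; apply: lerD; first exact: h1.
apply: le_trans (ler_wpM2l c0 h2) _.
rewrite /= -mulr_natr.
by rewrite mul1r -(mulr_natr c) le_eqVlt; apply/orP; left; apply/eqP; ring.
Qed.
End Real.
Section Real.
Variable R : realType.
Local Open Scope ring_scope.

Lemma div_anti (a X Y : R) : 0 <= a -> 0 < Y -> Y <= X -> a / X <= a / Y.
Proof.
move=> a0 Y0 YX; apply: ler_wpM2l => //.
by rewrite lef_pV2 // posrE; apply: lt_le_trans YX.
Qed.

Lemma geom_eq (x : R) a b : (a <= b)%N ->
  (\sum_(a <= i < b) x ^+ i) * (1 - x) = x ^+ a - x ^+ b.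
Proof.
elim: b => [|b IH] hab.
  have a0 : a = 0%N by move: hab; rewrite leqn0 => /eqP.
  by rewrite a0 big_geq // mul0r subrr.
case: (leqP a b) => h.
  by rewrite big_nat_recr //= mulrDl IH // exprS; ring.
have -> : a = b.+1 by lia.
by rewrite big_geq // mul0r subrr.
Qed.

Lemma geom_le (x : R) a b : 0 <= x -> x < 1 ->
  \sum_(a <= i < b) x ^+ i <= x ^+ a / (1 - x).
Proof.
move=> x0 x1.
have d0 : 0 < 1 - x by rewrite subr_gt0.
case: (leqP a b) => h; last first.
  rewrite big_geq; last exact: ltnW.
  by rewrite divr_ge0 ?exprn_ge0 // ltW.
rewrite ler_pdivlMr // geom_eq //.
by rewrite lerBlDr lerDl exprn_ge0.
Qed.

Lemma term_small (s K P : R) (i : nat) : 0 <= s -> 2 <= K -> (2 <= i)%N ->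
  P <= 1 -> P <= s ^+ 2 / K ^+ i -> P <= 4 * s ^+ 2 / ((K - 1 + s) * (K + s)).
Proof.
move=> s0 K2 i2 P1 Ps.
have D0 : 0 < (K - 1 + s) * (K + s) by apply: mulr_gt0; lra.
have [hKs|hKs] := lerP K s.
  apply: le_trans P1 _; rewrite ler_pdivlMr // mul1r.
  have -> : 4 * s ^+ 2 = (2 * s) * (2 * s) by ring.
  by apply: ler_pM; lra.
apply: le_trans Ps _.
have -> : 4 * s ^+ 2 / ((K - 1 + s) * (K + s)) = s ^+ 2 / (((K - 1 + s) * (K + s)) / 4).
  by field; apply/andP; split; apply/eqP; lra.
apply: div_anti; first exact: sqr_ge0.
  by apply: divr_gt0.
apply: le_trans (_ : K ^+ 2 <= K ^+ i); last by rewrite ler_eXn2l //; lra.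
rewrite ler_pdivrMr //.
have -> : K ^+ 2 * 4 = (2 * K) * (2 * K) by ring.
by apply: ler_pM; lra.
Qed.

Lemma term_large (s q P : R) (i : nat) : 0 <= s -> 0 < q ->
  P <= 1 -> P <= s ^+ 2 / (q ^+ 2) ^+ i -> P <= s * q^-1 ^+ i.
Proof.
move=> s0 q0 P1 Ps.
set y := s * q^-1 ^+ i.
have y0 : 0 <= y by rewrite /y mulr_ge0 // exprn_ge0 // invr_ge0 ltW.
have [hy|hy] := lerP 1 y; first exact: le_trans P1 hy.
apply: le_trans Ps _.
have -> : s ^+ 2 / (q ^+ 2) ^+ i = y * y.
  by rewrite /y -exprM mulnC exprM exprVn; field; rewrite expf_neq0 // gt_eqF.
by nra.
Qed.

Definition wgt (s : R) (k : nat) : R :=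
  8 * s ^+ 2 / ((k%:R - 1 + s) * (k%:R + s)) + 2 * s / (k%:R * (k%:R - 1)).

Lemma wsum s k N (P : nat -> R) : 0 <= s -> (2 <= k)%N ->
  (forall i, (2 <= i)%N -> P i <= 1) ->
  (forall i, (2 <= i)%N -> P i <= s ^+ 2 / k%:R ^+ i) ->
  \sum_(2 <= i < N) P i <= wgt s k.
Proof.
move=> s0 k2 P1 Ps.
have K2 : 2 <= (k%:R : R) by rewrite (ler_nat R 2 k).
rewrite /wgt; have Ps' := Ps.
set K : R := k%:R in Ps' K2 *.
set q := Num.sqrt K.
have hq : q ^+ 2 = K by rewrite sqr_sqrtr //; lra.
have q1 : 1 < q by have := sqrtr_ge0 K; rewrite -/q; nra.
have q0 : 0 < q by lra.
set A := 4 * s ^+ 2 / ((K - 1 + s) * (K + s)).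
have D0 : 0 < (K - 1 + s) * (K + s) by apply: mulr_gt0; lra.
have A0 : 0 <= A.
  by apply: divr_ge0; [apply: mulr_ge0; [lra|exact: sqr_ge0] | exact: ltW].
pose b := fun i : nat => if (i < 4)%N then A else s * q^-1 ^+ i.
have qi0 : 0 <= q^-1 by rewrite invr_ge0 ltW.
have b0 : forall i, 0 <= b i.
  by move=> i; rewrite /b; case: ifP => // _; rewrite mulr_ge0 // exprn_ge0.
have hPb : \sum_(2 <= i < N) P i <= \sum_(2 <= i < N) b i.
  rewrite big_nat_cond [X in _ <= X]big_nat_cond; apply: ler_sum.
  move=> i /andP[/andP[hi _] _]; have P1i := P1 i hi; have Psi := Ps' i hi.
  rewrite /b; case: ifP => _.
    by apply: (term_small (i := i)).
  by apply: term_large => //; rewrite hq; exact: Psi.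
apply: le_trans hPb _.
have hb4 : \sum_(2 <= i < N) b i <= \sum_(2 <= i < N + 4) b i.
  case: (ltnP N 2) => hN.
    rewrite big_geq; last exact: ltnW.
    by apply: sumr_ge0 => i _; exact: b0.
  rewrite [X in _ <= X](big_cat_nat _ (n := N)) //=; last by lia.
  by rewrite lerDl; apply: sumr_ge0 => i _; exact: b0.
apply: le_trans hb4 _.
rewrite big_ltn; last by lia.
rewrite big_ltn; last by lia.
rewrite (eq_big_nat _ _ (F2 := fun i => s * q^-1 ^+ i)); last first.
  by move=> i /andP[hi _]; rewrite /b ltnNge hi.
rewrite -mulr_sumr /b /=.
have -> : 8 * s ^+ 2 / ((K - 1 + s) * (K + s)) = A + A by rewrite /A; ring.
rewrite addrA lerD2l.
apply: le_trans (ler_wpM2l s0 (geom_le 4 (N + 4) qi0 _)) _.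
  by rewrite invr_lt1 ?unitfE ?gt_eqF //.
have -> : 2 * s / (K * (K - 1)) = s * (2 / (K * (K - 1))) by ring.
apply: ler_wpM2l => //.
rewrite -hq.
have -> : q^-1 ^+ 4 / (1 - q^-1) = (q ^+ 3 * (q - 1))^-1.
  by field; apply/andP; split; apply/eqP; lra.
have -> : 2 / (q ^+ 2 * (q ^+ 2 - 1)) = (q ^+ 2 * (q ^+ 2 - 1) / 2)^-1.
  by field; apply/andP; split; apply/eqP; nra.
rewrite lef_pV2 ?posrE; last first.
  - by apply: divr_gt0 => //; apply: mulr_gt0; [apply: exprn_gt0 | ]; nra.
  - by apply: mulr_gt0; [apply: exprn_gt0; lra | lra].
have := sqr_ge0 ((q - 1) * q); nra.
Qed.
End Real.
Section Real.
Variable R : realType.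
Local Open Scope ring_scope.

Lemma wgt_ge0 (s : R) k : 0 <= s -> (2 <= k)%N -> 0 <= wgt s k.
Proof.
move=> s0 k2; have K2 : 2 <= (k%:R : R) by rewrite (ler_nat R 2 k).
rewrite /wgt; apply: addr_ge0; apply: divr_ge0.
- by apply: mulr_ge0 => //; exact: sqr_ge0.
- by apply: mulr_ge0; lra.
- by apply: mulr_ge0; lra.
- by apply: mulr_ge0; lra.
Qed.

Lemma wgt_mono (s : R) a b : 0 <= s -> (2 <= a)%N -> (a <= b)%N -> wgt s b <= wgt s a.
Proof.
move=> s0 a2 ab.
have A2 : 2 <= (a%:R : R) by rewrite (ler_nat R 2 a).
have AB : (a%:R : R) <= b%:R by rewrite ler_nat.
rewrite /wgt; apply: lerD; apply: div_anti.
- by apply: mulr_ge0 => //; exact: sqr_ge0.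
- by apply: mulr_gt0; lra.
- by apply: ler_pM; lra.
- by apply: mulr_ge0; lra.
- by apply: mulr_gt0; lra.
- by apply: ler_pM; lra.
Qed.

Lemma wgt_sum (s : R) N : 0 <= s -> \sum_(2 <= k < N) wgt s k <= 10 * s.
Proof.
move=> s0.
case: (ltnP N 2) => hN.
  by rewrite big_geq; [lra | exact: ltnW].
pose g := fun k : nat => - (k%:R - 1 + s)^-1 : R.
pose h := fun k : nat => - (k%:R - 1)^-1 : R.
rewrite (eq_big_nat _ _ (F2 := fun k => 8 * s ^+ 2 * (g k.+1 - g k) + 2 * s * (h k.+1 - h k))); last first.
  move=> k /andP[k2 _].
  have K2 : 2 <= (k%:R : R) by rewrite (ler_nat R 2 k).
  rewrite /wgt /g /h -natr1.
  field.
  by repeat (apply/andP; split); apply/eqP; lra.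
rewrite big_split /= -!mulr_sumr !telescope_sumr //.
have N2 : 2 <= (N%:R : R) by rewrite (ler_nat R 2 N).
rewrite /g /h /=.
have e1 : 8 * s ^+ 2 * (- (N%:R - 1 + s)^-1 - - ((2%:R : R) - 1 + s)^-1) <= 8 * s.
  have -> : (2%:R : R) - 1 + s = 1 + s by rewrite -natr1; ring.
  have i1 : 0 <= (N%:R - 1 + s)^-1 by rewrite invr_ge0; lra.
  have i2 : s * (1 + s)^-1 <= 1.
    by rewrite ler_pdivrMr; [rewrite mul1r; lra | lra].
  have : 0 <= s * (N%:R - 1 + s)^-1 by apply: mulr_ge0.
  have i3 : s * (s * (1 + s)^-1) <= s * 1 by apply: ler_wpM2l.
  nra.
have e2 : 2 * s * (- (N%:R - 1)^-1 - - ((2%:R : R) - 1)^-1) <= 2 * s.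
  have -> : (2%:R : R) - 1 = 1 by rewrite -natr1; ring.
  have i1 : 0 <= (N%:R - 1 : R)^-1 by rewrite invr_ge0; lra.
  have : 0 <= s * (N%:R - 1 : R)^-1 by apply: mulr_ge0.
  rewrite invr1; nra.
lra.
Qed.
End Real.
Section PerU.
Variable R : realType.
Variables n M : nat.
Variable u : {ffun 'I_M -> 'I_n}.
Local Open Scope ring_scope.

Definition ep (p j : nat) := (\max_(k < M | (k < j)%N) logn p (u k).+1)%N.
Definition eall (p : nat) := (\max_(k < M) logn p (u k).+1)%N.
Definition Du : R := \sum_(p < n.+1 | prime p) ln (p%:R : R) * ((eall p - 1)%N)%:R.

Lemma logn_np p x : ~~ prime p -> logn p x = 0%N.
Proof. by move=> np; rewrite lognE (negbTE np). Qed.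

Lemma logn_biglcm p j :
  logn p (\big[lcmn/1%N]_(k < M | (k < j)%N) (u k).+1) = ep p j.
Proof.
have : (0 < \big[lcmn/1%N]_(k < M | (k < j)%N) (u k).+1)%N &&
  (logn p (\big[lcmn/1%N]_(k < M | (k < j)%N) (u k).+1) == ep p j).
  rewrite /ep; apply: (big_ind2 (fun a b => (0 < a)%N && (logn p a == b))).
  - by rewrite logn1.
  - move=> x1 x2 y1 y2 /andP[h1 /eqP e1] /andP[h2 /eqP e2].
    by rewrite lcmn_gt0 h1 h2 logn_lcm // e1 e2 eqxx.
  - by move=> k _; rewrite eqxx.
by case/andP => _ /eqP.
Qed.

Lemma L_pos j : (0 < \big[lcmn/1%N]_(k < M | (k < j)%N) (u k).+1)%N.
Proof. by elim/big_ind: _ => // a b ha hb; rewrite lcmn_gt0 ha hb. Qed.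

Lemma ep_big p j : (n < p)%N -> ep p j = 0%N.
Proof.
move=> hp; rewrite /ep big1 // => k _.
rewrite lognE; case: (boolP (p %| (u k).+1)%N) => h; last by rewrite !andbF.
have := dvdn_leq (ltn0Sn _) h; have := ltn_ord (u k); lia.
Qed.

Lemma ln_L j : ln ((\big[lcmn/1%N]_(k < M | (k < j)%N) (u k).+1)%:R : R) =
  \sum_(p < n.+1 | prime p) ln (p%:R : R) * (ep p j)%:R.
Proof.
set L := \big[lcmn/1%N]_(k < M | (k < j)%N) (u k).+1.
have L0 : (0 < L)%N by apply: L_pos.
have eL : L = (\prod_(0 <= p < (maxn L n).+1 | prime p) p ^ ep p j)%N.
  rewrite -{1}(partnT L0) (widen_partn _ (leq_maxl L n)).
  rewrite big_mkcond [RHS]big_mkcond; apply: eq_bigr => p _ /=.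
  rewrite logn_biglcm; case: (boolP (prime p)) => // np.
  by rewrite /ep big1 // => k _; exact: logn_np.
rewrite eL ln_prod_nat; last by move=> p pp; rewrite expn_gt0 prime_gt0.
rewrite (big_cat_nat _ (n := n.+1)) //=; last by lia.
rewrite [X in _ + X]big1_seq ?addr0; last first.
  move=> p /andP[pp]; rewrite mem_index_iota => /andP[h1 _].
  by rewrite ep_big // expn0 ln1.
rewrite big_mkord; apply: eq_bigr => p pp.
by rewrite natrX lnXn ?ltr0n ?prime_gt0 // mulr_natr.
Qed.

Lemma YZ_eq j : Yn R u j - Zn R u j =
  \sum_(p < n.+1 | prime p) ln (p%:R : R) * ((ep p j - 1)%N)%:R.
Proof.
rewrite /Yn /Zn ln_L -sumrB; apply: eq_bigr => p _; rewrite -mulrBr.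
congr (_ * _); rewrite /ep.
case: (\max_(k < M | (k < j)%N) logn p (u k).+1)%N => [|e] /=.
  by rewrite subrr.
by rewrite subn1 /= -natr1 addrK.
Qed.

Lemma YZ_le j : Yn R u j - Zn R u j <= Du.
Proof.
rewrite YZ_eq /Du; apply: ler_sum => p pp; apply: ler_wpM2l.
  by apply: ln_ge0; rewrite (ler_nat R 1 p) prime_gt0.
rewrite ler_nat leq_sub2r //; apply/bigmax_leqP => k _.
exact: (leq_bigmax (F := fun k => logn p (u k).+1)).
Qed.

Lemma YZ0 : Yn R u 0 - Zn R u 0 = 0.
Proof.
rewrite YZ_eq big1 // => p _.
by rewrite /ep big_pred0 // mulr0.
Qed.
End PerU.
Section Avg.
Variable R : realType.
Variables n M : nat.
Hypothesis n0 : (0 < n)%N.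
Local Open Scope ring_scope.

Definition Pr (p i : nat) : R := (n%:R ^+ M)^-1 *
  \sum_(u : {ffun 'I_M -> 'I_n}) ((i <= eall u p)%N : nat)%:R.

Lemma nM0 : 0 < (n%:R : R) ^+ M.
Proof. by apply: exprn_gt0; rewrite ltr0n. Qed.

Lemma Pr_le1 p i : Pr p i <= 1.
Proof.
rewrite /Pr ler_pdivrMl ?nM0 // mulr1.
apply: le_trans (_ : \sum_(u : {ffun 'I_M -> 'I_n}) (1 : R) <= _).
  by apply: ler_sum => u _; case: leqP.
by rewrite (sumr_const predT) card_ffun !card_ord natrX.
Qed.

Lemma cnt d m : (0 < d)%N ->
  \sum_(x < m) ((d %| x.+1)%N : nat)%:R = ((m %/ d)%N)%:R :> R.
Proof.
move=> d0; elim: m => [|m IH]; first by rewrite big_ord0 div0n.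
by rewrite big_ord_recr /= IH divnS // natrD addrC.
Qed.

Lemma sum_coord (k : 'I_M) (g : 'I_n -> R) :
  \sum_(u : {ffun 'I_M -> 'I_n}) g (u k) = n%:R ^+ M.-1 * \sum_(x : 'I_n) g x.
Proof.
have := @bigA_distr_bigA R 0 1 *%R +%R 'I_M 'I_n (fun (j : 'I_M) (x : 'I_n) => if j == k then g x else 1).
rewrite (bigD1 k) //= eqxx.
rewrite [X in _ * X = _](eq_bigr (fun _ => n%:R)); last first.
  move=> j /negbTE ->; by rewrite (sumr_const predT) card_ord.
rewrite (prodr_const (predC1 k)) cardC1 card_ord mulrC => ->.
apply: eq_bigr => u _.
by rewrite (bigD1 k) //= eqxx big1 ?mulr1 // => j /negbTE ->.
Qed.

Lemma Pr_leM p i : prime p -> (1 <= i)%N -> Pr p i <= M%:R / p%:R ^+ i.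
Proof.
move=> pp i1.
set d := (p ^ i)%N.
have d0 : (0 < d)%N by rewrite expn_gt0 prime_gt0.
have step : \sum_(u : {ffun 'I_M -> 'I_n}) ((i <= eall u p)%N : nat)%:R <=
    \sum_(u : {ffun 'I_M -> 'I_n}) \sum_(k < M) ((d %| (u k).+1)%N : nat)%:R :> R.
  apply: ler_sum => u _.
  case: (boolP [exists k : 'I_M, i <= logn p (u k).+1]%N) => [/existsP [k hk] | /existsPn hall].
    rewrite (bigD1 k) //= pfactor_dvdn // hk.
    have : (0 : R) <= \sum_(j < M | j != k) ((d %| (u j).+1)%N : nat)%:R.
      by apply: sumr_ge0 => j _.
    case: leqP => _ /=; lra.
  have : (eall u p <= i.-1)%N.
    apply/bigmax_leqP => k _; have := hall k; rewrite -ltnNge => h.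
    by rewrite -ltnS (ltn_predK h).
  move=> h; have -> : (i <= eall u p)%N = false.
    by apply/negbTE; rewrite -ltnNge; apply: leq_ltn_trans h _; rewrite prednK.
  by apply: sumr_ge0 => k _.
rewrite /Pr ler_pdivrMl ?nM0 //.
apply: le_trans step _.
rewrite exchange_big /=.
rewrite (eq_bigr (fun _ => n%:R ^+ M.-1 * ((n %/ d)%N)%:R)); last first.
  by move=> k _; rewrite (sum_coord k (fun x => ((d %| x.+1)%N : nat)%:R)) cnt.
rewrite sumr_const card_ord.
have hd : ((n %/ d)%N)%:R <= (n%:R : R) / (p%:R ^+ i).
  rewrite ler_pdivlMr; last by apply: exprn_gt0; rewrite ltr0n prime_gt0.
  by rewrite -natrX -natrM ler_nat leq_trunc_div.
case: M hd => [|M'] hd; first by rewrite mulr0n mul0r mulr0.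
rewrite /= exprSr -[X in X <= _]mulr_natr.
have nn0 : 0 < (n%:R : R) by rewrite ltr0n.
set q := ((n %/ d)%N)%:R : R.
have e1 : n%:R ^+ M' * q * M'.+1%:R = (n%:R ^+ M' * M'.+1%:R) * q :> R by ring.
have e2 : n%:R ^+ M' * n%:R * (M'.+1%:R / p%:R ^+ i) =
  (n%:R ^+ M' * M'.+1%:R) * (n%:R / p%:R ^+ i) :> R by ring.
rewrite e1 e2; apply: ler_wpM2l => //.

Qed.
End Avg.
Local Open Scope ring_scope.
Local Open Scope classical_set_scope.

Lemma cnt_ge e N : (e <= N)%N -> (e - 1 <= \sum_(2 <= i < N.+1) (i <= e))%N.
Proof.
move=> eN; case: e eN => [|e] eN; first by [].
rewrite (big_cat_nat _ (n := e.+2)) //=.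
rewrite (eq_big_nat _ _ (F2 := fun _ => 1%N)); last by move=> i /andP[_ h]; rewrite -ltnS h.
rewrite sum_nat_const_nat muln1.
have -> : (e.+2 - 2 = e.+1 - 1)%N by rewrite !subSS !subn0.
exact: leq_addr.
Qed.

Lemma avg_le (R : realType) n M : (0 < n)%N ->
  (n%:R ^+ M)^-1 * \sum_(u : {ffun 'I_M -> 'I_n}) Du R u <=
  \sum_(p < n.+1 | prime p) ln (p%:R : R) * \sum_(2 <= i < n.+1) Pr R n M p i.
Proof.
move=> n0.
set c := (n%:R ^+ M)^-1 : R.
have c0 : 0 <= c by rewrite invr_ge0; apply: ltW; apply: nM0.
apply: le_trans (_ : c * \sum_(u : {ffun 'I_M -> 'I_n}) \sum_(p < n.+1 | prime p)
   ln (p%:R : R) * \sum_(2 <= i < n.+1) ((i <= eall u p)%N : nat)%:R <= _).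
  apply: ler_wpM2l => //; apply: ler_sum => u _; apply: ler_sum => p pp.
  apply: ler_wpM2l; first by apply: ln_ge0; rewrite (ler_nat R 1 p) prime_gt0.
  rewrite -natr_sum ler_nat; apply: cnt_ge.
  apply/bigmax_leqP => k _; rewrite -ltnS; apply: leq_trans (ltn_logl _ (ltn0Sn _)) _.
  by rewrite ltnS; apply: ltnW; apply: ltn_ord.
rewrite le_eqVlt; apply/orP; left; apply/eqP.
rewrite exchange_big /= mulr_sumr; apply: eq_bigr => p _.
rewrite -mulr_sumr mulrCA; congr (_ * _).
rewrite exchange_big /= mulr_sumr; apply: eq_bigr => i _.
by rewrite /Pr.
Qed.
Local Open Scope ring_scope.
Local Open Scope classical_set_scope.

Theorem lemma6p1 (R : realType) (m : nat -> R)
  (m_inf : m n @[n --> \oo] --> +oo)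
  (m_o : m n / n%:R @[n --> \oo] --> (0 : R))
  (T : R) (T_gt0 : 0 < T) :
  exists C : R, exists N : nat, forall n : nat, (N <= n)%N ->
    `| Esup n (m n) T | <= C * Num.sqrt (m n).
Proof.
have /cvgryPge h := m_inf.
have [N0 _ HN0] := h 1.
exists (10 * ln 4 * Num.sqrt T), (maxn N0 1) => n hn.
have m1 : 1 <= m n by apply: HN0; rewrite /=; lia.
have n0 : (0 < n)%N by lia.
rewrite /Esup.
set M := Num.truncn (m n * T).
have c0 : 0 <= (n%:R ^+ M : R)^-1 by rewrite invr_ge0; apply: ltW; apply: nM0.
have hsup : forall u : {ffun 'I_M -> 'I_n},
  0 <= sup [set x : R | exists t : R, 0 <= t <= T /\
            x = Yn R u (Num.truncn (m n * t)) - Zn R u (Num.truncn (m n * t))]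
  <= Du R u.
  move=> u.
  set S := [set x : R | exists t : R, _].
  have S0 : S 0.
    exists 0; split; first by rewrite lexx ltW.
    by rewrite mulr0 truncn0 YZ0.
  have ub : ubound S (Du R u) by move=> x [t [_ ->]]; exact: YZ_le.
  have hs : has_sup S by split; [exists 0 | exists (Du R u)].
  apply/andP; split; first exact: (sup_upper_bound hs).
  by apply: ge_sup => //; exists 0.
rewrite ger0_norm; last first.
  by apply: mulr_ge0 => //; apply: sumr_ge0 => u _; case/andP: (hsup u).
apply: le_trans (_ : (n%:R ^+ M)^-1 * \sum_(u : {ffun 'I_M -> 'I_n}) Du R u <= _).
  by apply: ler_wpM2l => //; apply: ler_sum => u _; case/andP: (hsup u).
apply: le_trans (avg_le R M n0) _.
set s := Num.sqrt (M%:R : R).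
have s0 : 0 <= s by apply: sqrtr_ge0.
have hs2 : s ^+ 2 = M%:R by rewrite sqr_sqrtr.
apply: le_trans (_ : \sum_(p < n.+1 | prime p) ln (p%:R : R) * wgt s p <= _).
  apply: ler_sum => p pp; apply: ler_wpM2l.
    by apply: ln_ge0; rewrite (ler_nat R 1 p) prime_gt0.
  apply: wsum => //; first exact: prime_gt1.
    by move=> i _; apply: Pr_le1.
  by move=> i hi; rewrite hs2; apply: Pr_leM => //; lia.
have hab := @abel R n (wgt s).
have hab2 := hab (fun k hk => wgt_ge0 s0 (proj1 (andP hk))) (fun a b a2 ab _ => wgt_mono s0 a2 ab).
apply: le_trans hab2 _.
have l4 : 0 <= ln (4 : R) by apply: ln_ge0; lra.
have hw := ler_wpM2l l4 (wgt_sum n.+1 s0).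
apply: le_trans hw _.
have hs : s <= Num.sqrt (m n) * Num.sqrt T.
  rewrite -sqrtrM; last by lra.
  rewrite ler_sqrt; last by apply: mulr_ge0; lra.
  by rewrite /M truncn_le; apply: mulr_ge0; lra.
have h10 : 0 <= 10 * ln (4 : R) by apply: mulr_ge0 => //; lra.
have hh := ler_wpM2l h10 hs.
have e1 : ln (4 : R) * (10 * s) = 10 * ln 4 * s by ring.
have e2 : 10 * ln (4 : R) * (Num.sqrt (m n) * Num.sqrt T) =
  10 * ln 4 * Num.sqrt T * Num.sqrt (m n) by ring.
by rewrite e1 -e2.
Qed.
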